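(* Consider the mass-action system in the concentrations $x_1,\dots,x_6$ with positive reaction rate constants $k_1,\dots,k_6$: \[ \begin{aligned} \dot x_1&=-k_1x_1+k_4x_3x_5, & \dot x_2&=k_1x_1-k_2x_2+k_5x_4x_5, & \dot x_3&=k_2x_2-k_3x_3-k_4x_3x_5,\\ \dot x_4&=k_3x_3-k_5x_4x_5, & \dot x_5&=-k_4x_3x_5-k_5x_4x_5+k_6x_6, & \dot x_6&=k_4x_3x_5+k_5x_4x_5-k_6x_6, \end{aligned} \] with conservation laws $x_1+x_2+x_3+x_4=T_1$, $x_5+x_6=T_2$. Given positive reaction constants $k_1,\dots,k_6$ and positive total conservation constants $T_1,T_2$, there exist positive constants $N_1,N_2,N_3,N_4$ such that for any $\beta_1,\beta_2>0$ satisfying \[ N_1<\beta_1,\quad N_2<\beta_2,\quad \frac{\beta_2}{\beta_1}<N_3,\quad \frac{\beta_1}{\beta_2^2}<N_4, \] after replacing $k_1$ by $\bar k_1=\left(\beta_1\frac{1}{k_1+k_2}-\frac{1}{k_2}\right)^{-1}$ (which is then positive) and $k_6$ by $\bar k_6=\beta_2^{-1}k_6$, without altering $k_2,k_3,k_4,k_5,T_1,T_2$, the system has at least $3$ positive steady states, i.e. at least three points $x\in\mathbb R^6_{>0}$ with all right-hand sides zero, $x_1+x_2+x_3+x_4=T_1$ and $x_5+x_6=T_2$.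
   Context: This is the mass-action system of the hybrid histidine kinase network $X_1\xrightarrow{k_1}X_2\xrightarrow{k_2}X_3\xrightarrow{k_3}X_4$, $X_3+X_5\xrightarrow{k_4}X_1+X_6$, $X_4+X_5\xrightarrow{k_5}X_2+X_6$, $X_6\xrightarrow{k_6}X_5$. *)

(* Defs.v *)
From Stdlib Require Import Reals.
Open Scope R_scope.

Record state : Type := mkState { s1 : R; s2 : R; s3 : R; s4 : R; s5 : R; s6 : R }.

Definition f1 (k1 k2 k3 k4 k5 k6 : R) (x : state) : R :=
  - k1 * s1 x + k4 * s3 x * s5 x.
Definition f2 (k1 k2 k3 k4 k5 k6 : R) (x : state) : R :=
  k1 * s1 x - k2 * s2 x + k5 * s4 x * s5 x.
Definition f3 (k1 k2 k3 k4 k5 k6 : R) (x : state) : R :=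
  k2 * s2 x - k3 * s3 x - k4 * s3 x * s5 x.
Definition f4 (k1 k2 k3 k4 k5 k6 : R) (x : state) : R :=
  k3 * s3 x - k5 * s4 x * s5 x.
Definition f5 (k1 k2 k3 k4 k5 k6 : R) (x : state) : R :=
  - k4 * s3 x * s5 x - k5 * s4 x * s5 x + k6 * s6 x.
Definition f6 (k1 k2 k3 k4 k5 k6 : R) (x : state) : R :=
  k4 * s3 x * s5 x + k5 * s4 x * s5 x - k6 * s6 x.

Definition positive_steady_state (k1 k2 k3 k4 k5 k6 T1 T2 : R) (x : state) : Prop :=
  0 < s1 x /\ 0 < s2 x /\ 0 < s3 x /\ 0 < s4 x /\ 0 < s5 x /\ 0 < s6 x /\
  f1 k1 k2 k3 k4 k5 k6 x = 0 /\ f2 k1 k2 k3 k4 k5 k6 x = 0 /\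
  f3 k1 k2 k3 k4 k5 k6 x = 0 /\ f4 k1 k2 k3 k4 k5 k6 x = 0 /\
  f5 k1 k2 k3 k4 k5 k6 x = 0 /\ f6 k1 k2 k3 k4 k5 k6 x = 0 /\
  s1 x + s2 x + s3 x + s4 x = T1 /\ s5 x + s6 x = T2.

Definition at_least_three_pss (k1 k2 k3 k4 k5 k6 T1 T2 : R) : Prop :=
  exists x y z : state,
    x <> y /\ x <> z /\ y <> z /\
    positive_steady_state k1 k2 k3 k4 k5 k6 T1 T2 x /\
    positive_steady_state k1 k2 k3 k4 k5 k6 T1 T2 y /\
    positive_steady_state k1 k2 k3 k4 k5 k6 T1 T2 z.

(* Main.v *)
Require Import Defs.
From Stdlib Require Import Reals Lra Psatz.
Open Scope R_scope.

Definition HH a b c k6 T2 b2 p q (y:R) := k6*(T2-y)*(a*y^2+b*y+c) - b2*y*(p+q*y).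

Lemma HH_cont a b c k6 T2 b2 p q : continuity (HH a b c k6 T2 b2 p q).
Proof. unfold HH. reg. Qed.

Lemma root_dec f x y : continuity f -> x < y -> 0 < f x -> f y < 0 ->
  exists z, x < z < y /\ f z = 0.
Proof.
  intros Hc Hxy H1 H2.
  destruct (IVT (fun t => - f t) x y) as [z [[Hz1 Hz2] Hz]].
  - apply continuity_opp; auto.
  - auto.
  - lra.
  - lra.
  - exists z. assert (f z = 0) by lra.
    split; [split|]; auto.
    + destruct Hz1 as [|E]; auto. subst. lra.
    + destruct Hz2 as [|E]; auto. subst. lra.
Qed.

Lemma root_inc f x y : continuity f -> x < y -> f x < 0 -> 0 < f y ->
  exists z, x < z < y /\ f z = 0.
Proof.
  intros Hc Hxy H1 H2.
  destruct (IVT f x y) as [z [[Hz1 Hz2] Hz]]; auto.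
  exists z. split; [split|]; auto.
  + destruct Hz1 as [|E]; auto. subst. lra.
  + destruct Hz2 as [|E]; auto. subst. lra.
Qed.

Lemma three_roots a b c p q k6 T2 b2 y1 :
  0 < a -> 0 < b -> 0 < c -> 0 < p -> 0 < q -> 0 < k6 -> 0 < T2 -> 0 < b2 ->
  0 < y1 -> y1 < T2/2 -> a*y1^2 < c -> b*y1 < c -> b2*p*y1 = 4*k6*T2*c ->
  4*(b2*(p+q*T2/2)) < k6*a*T2^2 ->
  exists z1 z2 z3, 0 < z1 < y1 /\ y1 < z2 < T2/2 /\ T2/2 < z3 < T2 /\
    HH a b c k6 T2 b2 p q z1 = 0 /\ HH a b c k6 T2 b2 p q z2 = 0 /\
    HH a b c k6 T2 b2 p q z3 = 0.
Proof.
  intros ha hb hc hp hq hk hT hb2 hy1 hy1' h1 h2 h3 h4.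
  assert (H0 : 0 < HH a b c k6 T2 b2 p q 0).
  { unfold HH. replace (k6 * (T2 - 0) * (a * 0 ^ 2 + b * 0 + c) - b2 * 0 * (p + q * 0)) with (k6*T2*c) by ring.
    apply Rmult_lt_0_compat; [apply Rmult_lt_0_compat|]; lra. }
  assert (Hy1 : HH a b c k6 T2 b2 p q y1 < 0).
  { unfold HH.
    assert (hD : 0 < a*y1^2+b*y1+c) by nra.
    assert (k6*(T2-y1)*(a*y1^2+b*y1+c) <= k6*T2*(a*y1^2+b*y1+c)).
    { apply Rmult_le_compat_r; nra. }
    assert (k6*T2*(a*y1^2+b*y1+c) < k6*T2*(3*c)).
    { apply Rmult_lt_compat_l; nra. }
    assert (0 <= b2*y1*(q*y1)) by (apply Rmult_le_pos; nra).
    nra. }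
  assert (Hm : 0 < HH a b c k6 T2 b2 p q (T2/2)).
  { unfold HH.
    assert (E : k6 * (T2 - T2/2) * (a * (T2/2) ^ 2 + b * (T2/2) + c) -
      b2 * (T2/2) * (p + q * (T2/2)) = (T2/2) * (k6*(a * (T2/2) ^ 2 + b * (T2/2) + c) - b2*(p + q * (T2/2)))) by field.
    rewrite E. apply Rmult_lt_0_compat; [lra|].
    assert (0 < k6*(b*(T2/2)+c)) by (apply Rmult_lt_0_compat; nra).
    replace (k6 * (a * (T2 / 2) ^ 2 + b * (T2 / 2) + c)) with (k6*a*T2^2/4 + k6*(b*(T2/2)+c)) by field.
    lra. }
  assert (HT : HH a b c k6 T2 b2 p q T2 < 0).
  { unfold HH. replace (k6 * (T2 - T2) * (a * T2 ^ 2 + b * T2 + c) - b2 * T2 * (p + q * T2)) with (-(b2*T2*(p+q*T2))) by ring.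
    assert (0 < b2*T2*(p+q*T2)) by (apply Rmult_lt_0_compat; [apply Rmult_lt_0_compat|]; nra). lra. }
  destruct (root_dec _ 0 y1 (HH_cont a b c k6 T2 b2 p q)) as [z1 [? ?]]; auto.
  destruct (root_inc _ y1 (T2/2) (HH_cont a b c k6 T2 b2 p q)) as [z2 [? ?]]; auto.
  destruct (root_dec _ (T2/2) T2 (HH_cont a b c k6 T2 b2 p q)) as [z3 [? ?]]; auto; try lra.
  exists z1, z2, z3. tauto.
Qed.

Lemma root_to_state k2 k3 k4 k5 k6 T1 T2 E b2 z :
  0 < k2 -> 0 < k3 -> 0 < k4 -> 0 < k5 -> 0 < k6 -> 0 < T1 -> 0 < T2 -> 0 < E -> 0 < b2 ->
  0 < z < T2 ->
  HH (k4*E + k4/k2) (k3/k2+1) (k3/k5) k6 T2 b2 (T1*k3) (T1*k4) z = 0 ->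
  positive_steady_state (/E) k2 k3 k4 k5 (/b2*k6) T1 T2
    (mkState (k4*(T1*z/((k4*E + k4/k2)*z^2 + (k3/k2+1)*z + k3/k5))*z*E)
             ((T1*z/((k4*E + k4/k2)*z^2 + (k3/k2+1)*z + k3/k5))*(k3+k4*z)/k2)
             (T1*z/((k4*E + k4/k2)*z^2 + (k3/k2+1)*z + k3/k5))
             (k3*(T1*z/((k4*E + k4/k2)*z^2 + (k3/k2+1)*z + k3/k5))/(k5*z))
             z (T2 - z)).
Proof.
  intros hk2 hk3 hk4 hk5 hk6 hT1 hT2 hE hb2 [hz hz'] hH.
  set (D := (k4*E + k4/k2)*z^2 + (k3/k2+1)*z + k3/k5).
  assert (hD : 0 < D).
  { unfold D. assert (0 < k4*E + k4/k2).
    { assert (0 < k4*E) by (apply Rmult_lt_0_compat; lra).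
      assert (0 < k4/k2) by (apply Rdiv_lt_0_compat; lra). lra. }
    assert (0 < k3/k2) by (apply Rdiv_lt_0_compat; lra).
    assert (0 < k3/k5) by (apply Rdiv_lt_0_compat; lra).
    assert (0 < (k4*E + k4/k2)*z^2) by (apply Rmult_lt_0_compat; nra).
    assert (0 < (k3/k2+1)*z) by (apply Rmult_lt_0_compat; nra). lra. }
  set (x3 := T1*z/D).
  assert (hx3 : 0 < x3) by (unfold x3; apply Rdiv_lt_0_compat; nra).
  assert (Key : x3*(k3+k4*z) = /b2*k6*(T2-z)).
  { apply (Rmult_eq_reg_r (b2*D)); [| apply Rgt_not_eq; apply Rmult_lt_0_compat; lra].
    replace (x3*(k3+k4*z)*(b2*D)) with (b2*z*(T1*k3+T1*k4*z))
      by (unfold x3; field; lra).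
    replace (/b2*k6*(T2-z)*(b2*D)) with (k6*(T2-z)*D) by (field; lra).
    unfold HH in hH. unfold D. lra. }
  unfold positive_steady_state, f1, f2, f3, f4, f5, f6; simpl.
  fold D. fold x3.
  repeat split.
  - apply Rmult_lt_0_compat; [|lra]. apply Rmult_lt_0_compat; [|lra].
    apply Rmult_lt_0_compat; lra.
  - apply Rdiv_lt_0_compat; [|lra]. apply Rmult_lt_0_compat; nra.
  - exact hx3.
  - apply Rdiv_lt_0_compat; [|apply Rmult_lt_0_compat; lra]. apply Rmult_lt_0_compat; lra.
  - lra.
  - lra.
  - field; lra.
  - field; lra.
  - field; lra.
  - field; lra.
  - replace (- k4 * x3 * z - k5 * (k3 * x3 / (k5 * z)) * z + / b2 * k6 * (T2 - z))
      with (- (x3*(k3+k4*z)) + / b2 * k6 * (T2 - z)) by (field; lra). lra.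
  - replace (k4 * x3 * z + k5 * (k3 * x3 / (k5 * z)) * z - / b2 * k6 * (T2 - z))
      with ((x3*(k3+k4*z)) - / b2 * k6 * (T2 - z)) by (field; lra). lra.
  - replace (k4 * x3 * z * E + x3 * (k3 + k4 * z) / k2 + x3 + k3 * x3 / (k5 * z))
      with (x3 * D / z) by (unfold D; field; lra).
    unfold x3. field. lra.
  - ring.
Qed.

Ltac pos := first [assumption | lra | apply Rmult_lt_0_compat; pos | apply pow_lt; pos | apply Rdiv_lt_0_compat; pos].

Theorem proposition3p5 :
  forall k1 k2 k3 k4 k5 k6 T1 T2 : R,
    0 < k1 -> 0 < k2 -> 0 < k3 -> 0 < k4 -> 0 < k5 -> 0 < k6 ->
    0 < T1 -> 0 < T2 ->
    exists N1 N2 N3 N4 : R,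
      0 < N1 /\ 0 < N2 /\ 0 < N3 /\ 0 < N4 /\
      forall b1 b2 : R,
        0 < b1 -> 0 < b2 ->
        N1 < b1 -> N2 < b2 -> b2 / b1 < N3 -> b1 / (b2 ^ 2) < N4 ->
        0 < / (b1 * (1 / (k1 + k2)) - 1 / k2) /\
        at_least_three_pss (/ (b1 * (1 / (k1 + k2)) - 1 / k2)) k2 k3 k4 k5
                           (/ b2 * k6) T1 T2.
Proof.
  intros k1 k2 k3 k4 k5 k6 T1 T2 hk1 hk2 hk3 hk4 hk5 hk6 hT1 hT2.
  set (al := k4/(k1+k2)).
  set (b := k3/k2+1). set (c := k3/k5). set (p := T1*k3). set (q := T1*k4).
  assert (hal : 0 < al) by (unfold al; apply Rdiv_lt_0_compat; lra).
  assert (hb : 0 < b) by (unfold b; assert (0 < k3/k2) by (apply Rdiv_lt_0_compat; lra); lra).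
  assert (hc : 0 < c) by (unfold c; apply Rdiv_lt_0_compat; lra).
  assert (hp : 0 < p) by (unfold p; apply Rmult_lt_0_compat; lra).
  assert (hq : 0 < q) by (unfold q; apply Rmult_lt_0_compat; lra).
  assert (hpq : 0 < p + q*T2/2).
  { assert (0 < q*T2/2) by (apply Rdiv_lt_0_compat; [apply Rmult_lt_0_compat|]; lra). lra. }
  exists ((k1+k2)/k2), ((4*b*k6*T2 + 8*k6*c)/p),
    (k6*al*T2^2/(4*(p+q*T2/2))), (p^2/(16*al*k6^2*T2^2*c)).
  split; [apply Rdiv_lt_0_compat; lra|].
  split; [apply Rdiv_lt_0_compat; [|lra]; 
          assert (0 < 4*b*k6*T2) by (pos);
          assert (0 < 8*k6*c) by (pos); lra|].
  split; [apply Rdiv_lt_0_compat; [pos| lra]|].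
  split; [apply Rdiv_lt_0_compat; [apply pow_lt; lra| pos]|].
  intros b1 b2 hb1 hb2 hN1 hN2 hN3 hN4.
  set (E := b1 * (1 / (k1 + k2)) - 1 / k2).
  assert (hE : 0 < E).
  { assert (b1*k2 > k1+k2).
    { apply (Rmult_lt_compat_r k2) in hN1; [|lra].
      replace ((k1 + k2) / k2 * k2) with (k1+k2) in hN1 by (field; lra). lra. }
    replace E with ((b1*k2 - (k1+k2))/((k1+k2)*k2)) by (unfold E; field; lra).
    apply Rdiv_lt_0_compat; [lra|apply Rmult_lt_0_compat; lra]. }
  split; [apply Rinv_0_lt_compat; exact hE|].
  set (a := k4*E + k4/k2).
  assert (ha : a = al*b1) by (unfold a, E, al; field; lra).
  assert (ha0 : 0 < a) by (rewrite ha; apply Rmult_lt_0_compat; lra).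
  set (y1 := 4*k6*T2*c/(b2*p)).
  assert (hy1 : 0 < y1) by (unfold y1; apply Rdiv_lt_0_compat;
     [pos| apply Rmult_lt_0_compat; lra]).
  assert (hbp : b2*p > 4*b*k6*T2 + 8*k6*c).
  { apply (Rmult_lt_compat_r p) in hN2; [|lra].
    replace ((4 * b * k6 * T2 + 8 * k6 * c) / p * p) with (4 * b * k6 * T2 + 8 * k6 * c) in hN2
      by (field; lra). lra. }
  assert (hbk : 0 < b*k6*T2) by (pos).
  assert (hkc : 0 < k6*c) by (pos).
  assert (h1 : y1 < T2/2).
  { apply (Rmult_lt_reg_r (b2*p)); [apply Rmult_lt_0_compat; lra|].
    replace (y1*(b2*p)) with (4*k6*T2*c) by (unfold y1; field; lra).
    nra. }
  assert (h2 : b*y1 < c).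
  { apply (Rmult_lt_reg_r (b2*p)); [apply Rmult_lt_0_compat; lra|].
    replace (b*y1*(b2*p)) with (4*(b*k6*T2)*c) by (unfold y1; field; lra).
    nra. }
  assert (h3 : a*y1^2 < c).
  { assert (hN4' : b1 < p ^ 2 / (16 * al * k6 ^ 2 * T2 ^ 2 * c) * b2^2).
    { apply (Rmult_lt_compat_r (b2^2)) in hN4; [|apply pow_lt; lra].
      replace (b1 / b2 ^ 2 * b2 ^ 2) with b1 in hN4 by (field; lra). exact hN4. }
    set (K := al*16*k6^2*T2^2*c^2/(b2^2*p^2)).
    assert (hK : 0 < K) by (unfold K; apply Rdiv_lt_0_compat;
       [pos
       |apply Rmult_lt_0_compat; apply pow_lt; lra]).
    replace (a*y1^2) with (b1*K) by (rewrite ha; unfold y1, K; field; lra).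
    replace c with (p ^ 2 / (16 * al * k6 ^ 2 * T2 ^ 2 * c) * b2^2 * K)
      by (unfold K; field; repeat split; lra).
    apply Rmult_lt_compat_r; auto. }
  assert (h4 : 4*(b2*(p+q*T2/2)) < k6*a*T2^2).
  { assert (hN3' : b2 < k6*al*T2^2/(4*(p+q*T2/2)) * b1).
    { apply (Rmult_lt_compat_r b1) in hN3; [|lra].
      replace (b2 / b1 * b1) with b2 in hN3 by (field; lra). exact hN3. }
    apply (Rmult_lt_compat_l (4*(p+q*T2/2))) in hN3'; [|lra].
    replace (4 * (p + q * T2 / 2) * (k6 * al * T2 ^ 2 / (4 * (p + q * T2 / 2)) * b1))
      with (k6*a*T2^2) in hN3' by (rewrite ha; field; lra).
    lra. }
  assert (h5 : b2*p*y1 = 4*k6*T2*c) by (unfold y1; field; lra).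
  destruct (three_roots a b c p q k6 T2 b2 y1) as [z1 [z2 [z3 [hz1 [hz2 [hz3 [e1 [e2 e3]]]]]]]];
    auto.
  unfold at_least_three_pss.
  eexists; eexists; eexists.
  split; [|split; [|split; [|split; [|split]]]].
  4: apply (root_to_state k2 k3 k4 k5 k6 T1 T2 E b2 z1); auto; lra.
  4: apply (root_to_state k2 k3 k4 k5 k6 T1 T2 E b2 z2); auto; lra.
  4: apply (root_to_state k2 k3 k4 k5 k6 T1 T2 E b2 z3); auto; lra.
  all: intro Heq; apply (f_equal s5) in Heq; simpl in Heq; lra.
Qed.
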